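(* Let $G$ be a graph and $S\subseteq V(G)$. For any nonempty set $C \subseteq V(G)$ such that $G[C]$ is connected, the following conditions are equivalent: (i) $N(C)$ is an important $C-S$ separator; (ii) for every $v \in C$, $N(C)$ is an important $\{v\}-S$ separator; (iii) there exists $v \in C$ such that $N(C)$ is an important $\{v\}-S$ separator.
   Context: $N(C)$ is the set of vertices outside $C$ with a neighbour in $C$. For $X,Y\subseteq V(G)$, a set $W\subseteq V(G)$ is an $X-Y$ separator if no connected component of $G\setminus W$ contains both a vertex of $X$ and a vertex of $Y$. For a graph $H$ and $Z\subseteq V(H)$, $R_H(Z)$ is the set of vertices reachable from $Z$ in $H$. An inclusion-wise minimal $X-Y$ separator $W$ is an important $X-Y$ separator if there is no $X-Y$ separator $W'$ with $|W'|\le|W|$ and $R_{G\setminus W}(X\setminus W)\subsetneq R_{G\setminus W'}(X\setminus W')$. *)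

(* Defs.v *)
From mathcomp Require Import all_boot.
Set Implicit Arguments. Unset Strict Implicit. Unset Printing Implicit Defensive.

Section Graphs.
Variables (T : finType) (e : rel T).

Definition simple_graph : Prop := symmetric e /\ irreflexive e.

Definition induced (A : {set T}) : rel T :=
  [rel x y | [&& e x y, x \in A & y \in A]].

Definition del (W : {set T}) : rel T := induced (~: W).

Definition nbh (C : {set T}) : {set T} :=
  [set v | (v \notin C) && [exists u in C, e u v]].

(* G[C] is connected (C nonempty is assumed separately). *)
Definition connected_in (C : {set T}) : Prop :=
  forall u v, u \in C -> v \in C -> connect (induced C) u v.

Definition reach (W Z : {set T}) : {set T} :=
  [set v | (v \notin W) && [exists z in Z :\: W, connect (del W) z v]].

Definition separator (X Y W : {set T}) : Prop :=
  forall x y, x \in X :\: W -> y \in Y :\: W -> ~~ connect (del W) x y.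

Definition min_separator (X Y W : {set T}) : Prop :=
  separator X Y W /\ forall W' : {set T}, W' \proper W -> ~ separator X Y W'.

Definition important_separator (X Y W : {set T}) : Prop :=
  min_separator X Y W /\
  ~ exists W' : {set T}, [/\ separator X Y W', #|W'| <= #|W| &
                   reach W X \proper reach W' X].

End Graphs.

(* Main.v *)
Require Import Defs.
From mathcomp Require Import all_boot.

Section Aux.
Variables (T : finType) (e : rel T).
Hypothesis esym : symmetric e.

Lemma del_sym W : symmetric (del e W).
Proof.
move=> x y; rewrite /del /induced /= esym.
by apply/idP/idP => /and3P[-> -> ->].
Qed.

Lemma dconn_sym W : connect_sym (del e W).
Proof. exact: sym_connect_sym (del_sym W). Qed.

Variables (C W : {set T}) (v : T).
Hypothesis dis : forall x, x \in C -> x \notin W.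
Hypothesis cC : connected_in e C.
Hypothesis vC : v \in C.

Lemma conn_C x : x \in C -> connect (del e W) v x.
Proof.
move=> xC; apply: (@connect_sub _ (induced e C) (del e W) _ v x (cC v x vC xC)) => a b /and3P[eab aC bC].
apply: connect1; by rewrite /del /induced /= eab !inE (dis _ aC) (dis _ bC).
Qed.

Lemma reach_eq : reach e W C = reach e W [set v].
Proof.
apply/setP => y; rewrite !inE; apply/andP/andP => -[yW /existsP[z /andP[zC cz]]];
  split => //; apply/existsP.
- exists v; rewrite !inE eqxx (dis _ vC) /=.
  move: zC; rewrite !inE => /andP[_ zC].
  exact: connect_trans (conn_C _ zC) cz.
- have /eqP zv : z == v by move: zC; rewrite !inE => /andP[].
  rewrite zv in cz.
  by exists v; rewrite !inE vC (dis _ vC).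
Qed.

Lemma sep_eq S : separator e C S W <-> separator e [set v] S W.
Proof.
split => H x y xX yY.
- move: xX; rewrite !inE => /andP[_ /eqP ->]; apply: H yY.
  by rewrite !inE vC (dis _ vC).
- apply/negP => cxy.
  have : connect (del e W) v y.
    move: xX; rewrite !inE => /andP[_ xC].
    exact: connect_trans (conn_C _ xC) cxy.
  apply/negP; apply: H yY; by rewrite !inE (dis _ vC) eqxx.
Qed.

End Aux.

Lemma C_in_reach (T : finType) (e : rel T) (C W : {set T}) :
  (forall x, x \in C -> x \notin W) -> C \subset reach e W C.
Proof.
move=> dis; apply/subsetP => x xC; rewrite !inE (dis _ xC) /=.
by apply/existsP; exists x; rewrite !inE xC (dis _ xC) connect0.
Qed.

Lemma reach_notin (T : finType) (e : rel T) (W X : {set T}) x :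
  x \in reach e W X -> x \notin W.
Proof. by rewrite inE => /andP[]. Qed.

Lemma key (T : finType) (e : rel T) (S C : {set T}) v :
  symmetric e -> connected_in e C -> v \in C ->
  important_separator e C S (nbh e C) <-> important_separator e [set v] S (nbh e C).
Proof.
move=> esym cC vC.
have disN : forall x, x \in C -> x \notin nbh e C by move=> x xC; rewrite inE xC.
have disP : forall W' : {set T}, W' \proper nbh e C -> forall x, x \in C -> x \notin W'.
  move=> W' pW' x xC; apply/negP => xW.
  by move: (disN x xC); rewrite (subsetP (proper_sub pW') x xW).
have sE : forall W : {set T}, (forall x, x \in C -> x \notin W) ->
    separator e C S W <-> separator e [set v] S W.
  by move=> W dW; exact: (@sep_eq T e C W v dW cC vC S).
have rE : forall W : {set T}, (forall x, x \in C -> x \notin W) ->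
    reach e W C = reach e W [set v].
  by move=> W dW; exact: (@reach_eq T e C W v dW cC vC).
rewrite /important_separator /min_separator (rE _ disN).
split => -[[sep minl] nimp]; split; first split.
- by apply/(sE _ disN).
- move=> W' pW' s'; apply: (minl W' pW'); by apply/(sE _ (disP _ pW')).
- move=> [W' [s' c' p']].
  have sub : C \subset reach e W' [set v].
    apply: subset_trans (proper_sub p'); rewrite -(rE _ disN).
    exact: C_in_reach.
  have dW : forall x, x \in C -> x \notin W'.
    by move=> x xC; apply: (@reach_notin _ e W' [set v]); apply: (subsetP sub).
  apply: nimp; exists W'; split => //.
    by apply/(sE _ dW).
  by rewrite (rE _ dW).
- split; first by apply/(sE _ disN).
  move=> W' pW' s'; apply: (minl W' pW'); by apply/(sE _ (disP _ pW')).
- move=> [W' [s' c' p']].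
  have sub : C \subset reach e W' C.
    apply: subset_trans (proper_sub p'); rewrite -(rE _ disN).
    exact: C_in_reach.
  have dW : forall x, x \in C -> x \notin W'.
    by move=> x xC; apply: (@reach_notin _ e W' C); apply: (subsetP sub).
  apply: nimp; exists W'; split => //.
    by apply/(sE _ dW).
  by rewrite -(rE _ dW).
Qed.

Theorem lemma3p3 (T : finType) (e : rel T) (S C : {set T}) :
  simple_graph e -> C != set0 -> connected_in e C ->
  (important_separator e C S (nbh e C) <->
     (forall v, v \in C -> important_separator e [set v] S (nbh e C)))
  /\
  ((forall v, v \in C -> important_separator e [set v] S (nbh e C)) <->
     (exists2 v, v \in C & important_separator e [set v] S (nbh e C))).
Proof.
move=> [esym _] /set0Pn[v0 v0C] cC; split; split.
- by move=> H v vC; apply/(@key _ _ S _ _ esym cC vC).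
- by move=> H; apply/(@key _ _ S _ _ esym cC v0C); apply: H.
- by move=> H; exists v0 => //; apply: H.
- move=> [v vC Hv] w wC; apply/(@key _ _ S _ _ esym cC wC); exact/(@key _ _ S _ _ esym cC vC).
Qed.
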